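(* In the setting of the context (with $d_i^\pm>0$ for all $i$), let $s=\min_{i\in[k]}n_i/n$. Then $$\lambda_{\max}(C^+)\le\tau^-+\frac{n\eta}{n(s(1-2\eta)+\eta)-(1-\eta)},\qquad\lambda_{\min}(C^-)\ge\tau^+,$$ and consequently $$\|(C^-)^{-1/2}C^+(C^-)^{-1/2}\|\le\frac{\lambda_{\max}(C^+)}{\lambda_{\min}(C^-)}\le\frac{\tau^-+\frac{n\eta}{n(s(1-2\eta)+\eta)-(1-\eta)}}{\tau^+}.$$
   Context: SSBM with $n$ nodes, $k\ge2$ clusters $C_1,\dots,C_k$ of sizes $n_1,\dots,n_k$, edge probability $p\in(0,1]$ and sign-flip probability $\eta\in[0,1/2)$ (edges present independently w.p. $p$, signed $+1$ within and $-1$ across clusters, signs flipped independently w.p. $\eta$). Parameters $\tau^+>0$, $\tau^-\ge0$. Expected positive/negative degrees of a node in $C_i$: $d_i^+=p(n_i(1-2\eta)+n\eta-(1-\eta))$, $d_i^-=p(n(1-\eta)-n_i(1-2\eta)-\eta)$. $u^\pm=(\sqrt{n_i/d_i^\pm})_{i\in[k]}$. $C^+=-p\eta u^+(u^+)^\top+\mathrm{diag}_i\big(1+\tau^-+\frac p{d_i^+}(1-\eta-n_i(1-2\eta))\big)$, $C^-=-p(1-\eta)u^-(u^-)^\top+\mathrm{diag}_i\big(1+\tau^++\frac p{d_i^-}(\eta+n_i(1-2\eta))\big)$. *)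

(* Defs.v *)
From HB Require Import structures.
From mathcomp Require Import all_boot all_order all_algebra.
From mathcomp Require Import polyrcf.
From mathcomp Require Import classical_sets reals.
Set Implicit Arguments. Unset Strict Implicit. Unset Printing Implicit Defensive.
Import Order.TTheory GRing.Theory Num.Theory.
Local Open Scope ring_scope.

Section SSBM.
Variable R : realType.

(* Expected positive / negative degrees of a node in cluster C_i
   (nn = n, ni = n_i). *)
Definition dplus (p eta : R) (nn ni : nat) : R :=
  p * (ni%:R * (1 - 2 * eta) + nn%:R * eta - (1 - eta)).
Definition dminus (p eta : R) (nn ni : nat) : R :=
  p * (nn%:R * (1 - eta) - ni%:R * (1 - 2 * eta) - eta).

Definition Cplus (k : nat) (nn : nat) (ns : 'I_k -> nat) (p eta taum : R)
  : 'M[R]_k :=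
  \matrix_(i, j)
    (- p * eta * Num.sqrt ((ns i)%:R / dplus p eta nn (ns i))
              * Num.sqrt ((ns j)%:R / dplus p eta nn (ns j))
     + (i == j)%:R * (1 + taum + p / dplus p eta nn (ns i)
                                   * (1 - eta - (ns i)%:R * (1 - 2 * eta)))).

Definition Cminus (k : nat) (nn : nat) (ns : 'I_k -> nat) (p eta taup : R)
  : 'M[R]_k :=
  \matrix_(i, j)
    (- p * (1 - eta) * Num.sqrt ((ns i)%:R / dminus p eta nn (ns i))
                     * Num.sqrt ((ns j)%:R / dminus p eta nn (ns j))
     + (i == j)%:R * (1 + taup + p / dminus p eta nn (ns i)
                                   * (eta + (ns i)%:R * (1 - 2 * eta)))).

(* Largest / smallest eigenvalue: largest / smallest real root of the
   characteristic polynomial (rootsR returns the sorted list of real roots). *)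
Definition lambda_max (k : nat) (A : 'M[R]_k) : R :=
  last 0 (rootsR (char_poly A)).
Definition lambda_min (k : nat) (A : 'M[R]_k) : R :=
  head 0 (rootsR (char_poly A)).

Definition vnorm (k : nat) (x : 'cV[R]_k) : R :=
  Num.sqrt (\sum_i x i 0 ^+ 2).
Definition opnorm (k : nat) (A : 'M[R]_k) : R :=
  reals.sup [set r : R | exists x : 'cV[R]_k, vnorm x = 1 /\ r = vnorm (A *m x)]%classic.

Definition is_inv_sqrt (k : nat) (C S : 'M[R]_k) : Prop :=
  S^T = S /\ (forall x : 'cV[R]_k, x != 0 -> 0 < (x^T *m S *m x) 0 0)
  /\ S *m S = invmx C.

End SSBM.

(* Main.v *)
Require Import Defs.
From HB Require Import structures.
From mathcomp Require Import all_boot all_order all_algebra.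
From mathcomp Require Import polyrcf reals.
From mathcomp Require Import complex spectral sesquilinear ring lra.
Import Order.TTheory GRing.Theory Num.Theory.
Local Open Scope ring_scope.

Section Spec.
Set Implicit Arguments.
Unset Strict Implicit.
Local Open Scope sesquilinear_scope.
Variable R : rcfType.
Lemma last_ge (s : seq R) y : path <%R y s -> y <= last y s.
Proof.
elim: s y => [|z s IH] y //= /andP[yz pz].
exact: le_trans (ltW yz) (IH _ pz).
Qed.

Lemma last_max (s : seq R) x : sorted <%R s -> x \in s -> x <= last 0 s.
Proof.
case: s => [//|y s] /=.
elim: s y => [|z s IH] y /=; first by rewrite inE => _ /eqP ->.
move=> /andP[yz pz]; rewrite inE => /orP[/eqP ->|xin].
  by apply: le_trans (ltW yz) _; apply: last_ge.
exact: IH.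
Qed.

Lemma head_min (s : seq R) x : sorted <%R s -> x \in s -> head 0 s <= x.
Proof.
case: s => [//|y s] /= ps; rewrite inE => /orP[/eqP ->//|xin].
have := order_path_min (@lt_trans _ _) ps => /allP /(_ _ xin) /ltW //.
Qed.

Lemma in_rootsR (p : {poly R}) x : p != 0 -> root p x -> x \in rootsR p.
Proof.
move=> p0 rx; rewrite -(roots_on_rootsR p0) rx andbT.
by rewrite in_itv.
Qed.

Local Notation C := (R[i]).

Lemma spec_upper k (A : 'M[R]_k) (x : 'cV[R]_k) : A^T = A ->
  (x^T *m A *m x) 0 0 <= last 0 (rootsR (char_poly A)) * (x^T *m x) 0 0.
Proof.
move=> hA.
set L := last 0 (rootsR (char_poly A)).
pose f := @real_complex R.
pose AC := map_mx f A.
have creal : forall r : R, (f r : C) \is Num.real.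
  by move=> r; rewrite /f /= complex_real.
have conjf : forall r : R, ((f r)^* )%R = f r by move=> r; rewrite conj_Creal.
have herm : AC \is hermsymmx.
  apply/is_hermitianmxP; rewrite expr0 scale1r; apply/matrixP=> i j; rewrite !mxE.
  rewrite conjf; congr (f _).
  by have := congr1 (fun M : 'M[R]_k => M i j) hA; rewrite mxE => <-.
have := hermitian_normalmx herm => /orthomx_spectralP.
set P := spectralmx AC; set d := spectral_diag AC => eqA.
have Pu : P \is unitarymx := spectral_unitarymx AC.
have Punit : P \in unitmx := spectral_unit AC.
have dreal := hermitian_spectral_diag_real herm.
have dle : forall j, d 0 j <= f L.
  move=> j; have := mxOverP dreal 0 j.
  have : eigenvalue AC (d 0 j).
    apply/eigenvalueP; exists (row j P).
      rewrite -row_mul.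
      have -> : P *m AC = diag_mx d *m P.
        by rewrite {1}eqA !mulmxA mulmxV // mul1mx.
      apply/rowP => l; rewrite mul_diag_mx !mxE //.
    apply/eqP => h; have := congr1 (fun M : 'M[C]_k => M j j) (unitarymxP Pu).
    rewrite !mxE eqxx /= big1 => [/eqP|l _]; first by rewrite eq_sym oner_eq0.
    by have := congr1 (fun M : 'rV[C]_k => M 0 l) h; rewrite !mxE => ->; rewrite mul0r.
  case E: (d 0 j) => [a b]; rewrite complex_real => ev /eqP b0; subst b.
  idtac.
  move: ev; rewrite eigenvalue_root_char -map_char_poly -[(a +i* 0)%C]/(f a) fmorph_root lecR.
  move=> ra; apply: last_max; first exact: sorted_roots.
  apply: in_rootsR => //; exact: monic_neq0 (char_poly_monic A).
suff : f ((x^T *m A *m x) 0 0) <= f (L * (x^T *m x) 0 0) by rewrite lecR.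
pose xC := map_mx f x.
have e1 : f ((x^T *m A *m x) 0 0) = (xC^T *m AC *m xC) 0 0.
  rewrite (_ : f ((x^T *m A *m x) 0 0) = (map_mx f (x^T *m A *m x)) 0 0); last by rewrite [RHS]mxE.
  by rewrite !map_mxM map_trmx.
have e2 : f (L * (x^T *m x) 0 0) = f L * (xC^T *m xC) 0 0.
  have fM : {morph f : a b / a * b} by move=> a b; rewrite /f rmorphM.
  rewrite fM (_ : f ((x^T *m x) 0 0) = (map_mx f (x^T *m x)) 0 0); last by rewrite [RHS]mxE.
  by rewrite !map_mxM map_trmx.
rewrite e1 e2.
pose y := P *m xC.
have ey : xC^T *m P^t* = y^t*.
  rewrite /y trmx_mul map_mxM; congr (_ *m _).
  apply/matrixP => i j; rewrite !mxE; symmetry; exact: conjf.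
have PtP : P^t* *m P = 1%:M.
  by rewrite -invmx_unitary // mulVmx.
rewrite eqA invmx_unitary // -!mulmxA [diag_mx d *m _]mulmxA !mulmxA ey.
have -> : xC^T *m xC = y^t* *m y.
  by rewrite -ey -mulmxA [P^t* *m _]mulmxA PtP mul1mx.
rewrite -!mulmxA -/y mul_diag_mx !mxE mulr_sumr; apply: ler_sum => i _.
rewrite !mxE; set Y := (\sum_j _); rewrite mulrCA.
apply: ler_wpM2r; first by rewrite mulrC mul_conjC_ge0.
exact: dle.
Qed.
End Spec.

Section Gen.
Set Implicit Arguments.
Unset Strict Implicit.
Variable R : realType.
Variable k : nat.
Implicit Types (P : 'M[R]_k) (u w x : 'cV[R]_k).

Definition bil P u w : R := (u^T *m P *m w) 0 0.
Definition n2 u : R := (u^T *m u) 0 0.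

Lemma n2E u : n2 u = \sum_i u i 0 ^+ 2.
Proof. by rewrite /n2 mxE; apply: eq_bigr => i _; rewrite mxE expr2. Qed.

Lemma n2_ge0 u : 0 <= n2 u.
Proof. by rewrite n2E; apply: sumr_ge0 => i _; exact: sqr_ge0. Qed.

Lemma n2_gt0 u : u != 0 -> 0 < n2 u.
Proof.
move=> un; rewrite lt_def n2_ge0 andbT; apply: contra un.
rewrite n2E psumr_eq0 => [/allP h|i _]; last exact: sqr_ge0.
apply/eqP/matrixP => i j; rewrite (ord1 j) mxE.
by have := h i (mem_index_enum i); rewrite /= sqrf_eq0 => /eqP.
Qed.

Lemma bilC P u w : P^T = P -> bil P w u = bil P u w.
Proof.
move=> hP; rewrite /bil.
have -> : (w^T *m P *m u) 0 0 = ((w^T *m P *m u)^T) 0 0 by rewrite [RHS]mxE.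
by rewrite !trmx_mul trmxK hP mulmxA.
Qed.

Lemma bil_expand P u w t : P^T = P ->
  bil P (u + t *: w) (u + t *: w) = bil P u u + 2 * t * bil P u w + t ^+ 2 * bil P w w.
Proof.
move=> hP; have hC := @bilC P u w hP; move: hC; rewrite /bil => hC.
have -> : (u + t *: w)^T = u^T + t *: w^T by apply/matrixP => i j; rewrite !mxE.
rewrite !(mulmxDl, mulmxDr) -!scalemxAl -!scalemxAr !mxE; move: hC; rewrite !mxE => ->.
ring.
Qed.

Lemma cs_scalar (a b c : R) : 0 <= c ->
  (forall t, 0 <= a + 2 * t * b + t ^+ 2 * c) -> b ^+ 2 <= a * c.
Proof.
move=> c0 H; have [cp|c00] : 0 < c \/ c = 0.
    by move: c0; rewrite le_eqVlt => /orP[/eqP->|->]; [right|left].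
  have := H (- b / c).
  have -> : a + 2 * (- b / c) * b + (- b / c) ^+ 2 * c = (a * c - b ^+ 2) / c.
    by field; rewrite gt_eqF.
  move=> h; have := mulr_ge0 h (ltW cp); rewrite divfK ?gt_eqF //.
  by rewrite subr_ge0.
subst c; rewrite mulr0.
have [->|bn] := eqVneq b 0; first by rewrite expr0n.
have := H (- (a + 1) / (2 * b)).
have -> : a + 2 * (- (a + 1) / (2 * b)) * b + (- (a + 1) / (2 * b)) ^+ 2 * 0 = -1.
  by field.
by rewrite oppr_ge0 ler10.
Qed.

Lemma cs_bil P u w : P^T = P -> (forall z, 0 <= bil P z z) ->
  bil P u w ^+ 2 <= bil P u u * bil P w w.
Proof.
move=> hP H; apply: cs_scalar => [|t]; first exact: H.
by rewrite -bil_expand.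
Qed.

Lemma bil1 u w : bil 1%:M u w = \sum_i u i 0 * w i 0.
Proof. by rewrite /bil mulmx1 mxE; apply: eq_bigr => i _; rewrite mxE. Qed.

Lemma cs_sum (a b : 'I_k -> R) :
  (\sum_i a i * b i) ^+ 2 <= (\sum_i a i ^+ 2) * (\sum_i b i ^+ 2).
Proof.
have := @cs_bil 1%:M (\col_i a i) (\col_i b i) (trmx1 _ _).
rewrite !bil1.
under eq_bigr do rewrite !mxE.
under [X in _ <= X * _]eq_bigr do rewrite !mxE -expr2.
under [X in _ <= _ * X]eq_bigr do rewrite !mxE -expr2.
apply=> z; rewrite bil1; apply: sumr_ge0 => i _; rewrite -expr2; exact: sqr_ge0.
Qed.

Lemma qdiag (c : R) (U D : 'I_k -> R) x :
  bil (\matrix_(i, j) (c * U i * U j + (i == j)%:R * D i)) x x =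
  c * (\sum_i U i * x i 0) ^+ 2 + \sum_i D i * x i 0 ^+ 2.
Proof.
rewrite /bil !mxE.
transitivity (\sum_j \sum_i (c * (U i * x i 0) * (U j * x j 0)
                + (i == j)%:R * (D i * x i 0 * x j 0))).
  apply: eq_bigr => j _; rewrite !mxE big_distrl /=; apply: eq_bigr => i _.
  rewrite !mxE; ring.
under eq_bigr do rewrite big_split; rewrite big_split /=; congr (_ + _).
  rewrite expr2 big_distrr /= mulr_sumr; apply: eq_bigr => j _.
  rewrite big_distrl /= mulr_sumr; apply: eq_bigr => i _; ring.
apply: eq_bigr => j _; rewrite (bigD1 j) //= eqxx mul1r big1 ?addr0.
  by rewrite expr2 mulrA.
by move=> i /negPf ->; rewrite mul0r.
Qed.


Lemma psd_gen (c N : R) (U D m : 'I_k -> R) x :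
  0 <= c -> (forall i, 0 < D i) -> (forall i, U i ^+ 2 * D i = m i) ->
  \sum_i m i = N ->
  c * (\sum_i U i * x i 0) ^+ 2 <= \sum_i (c * N / D i) * x i 0 ^+ 2.
Proof.
move=> c0 D0 hU hN.
have sD : forall i, Num.sqrt (D i) != 0 by move=> i; rewrite gt_eqF // sqrtr_gt0.
have sD2 : forall i, Num.sqrt (D i) ^+ 2 = D i by move=> i; rewrite sqr_sqrtr // ltW.
have -> : \sum_i U i * x i 0 =
   \sum_i (U i * Num.sqrt (D i)) * (x i 0 / Num.sqrt (D i)).
  by apply: eq_bigr => i _; field; exact: sD.
have h := cs_sum (fun i => U i * Num.sqrt (D i)) (fun i => x i 0 / Num.sqrt (D i)).
have e1 : \sum_i (U i * Num.sqrt (D i)) ^+ 2 = N.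
  by rewrite -hN; apply: eq_bigr => i _; rewrite exprMn sD2 hU.
have e2 : \sum_i (x i 0 / Num.sqrt (D i)) ^+ 2 = \sum_i x i 0 ^+ 2 / D i.
  by apply: eq_bigr => i _; rewrite expr_div_n sD2.
rewrite /= e1 e2 in h.
apply: le_trans (ler_wpM2l c0 h) _.
rewrite mulr_sumr mulr_sumr; apply: ler_sum => i _; rewrite le_eqVlt; apply/orP; left.
apply/eqP; field; rewrite gt_eqF //.
Qed.

Lemma eig_vec (A : 'M[R]_k) r : root (char_poly A) r ->
  exists x, 0 < n2 x /\ bil A x x = r * n2 x.
Proof.
rewrite -eigenvalue_root_char => /eigenvalueP [v hv vn].
exists v^T; split; first by apply: n2_gt0; rewrite trmx_eq0.
by rewrite /bil /n2 trmxK hv -scalemxAl mxE.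
Qed.

End Gen.

Lemma pos_side (R : realType) (p X : R) : 0 < p -> 0 < p * X -> (X != 0) && (p != 0).
Proof.
move=> p0 h; rewrite (gt_eqF p0) andbT gt_eqF //.
by rewrite -(pmulr_rgt0 _ p0).
Qed.

Theorem mainTheorem10 (R : realType) (k nn : nat) (ns : 'I_k -> nat)
  (p eta taup taum : R) :
  (2 <= k)%N ->
  (\sum_i ns i)%N = nn ->
  0 < p -> p <= 1 ->
  0 <= eta -> eta < 1 / 2 ->
  0 < taup -> 0 <= taum ->
  (forall i, 0 < dplus p eta nn (ns i)) ->
  (forall i, 0 < dminus p eta nn (ns i)) ->
  forall s : R, s = \big[Num.min/1]_i ((ns i)%:R / nn%:R) ->
  let B := taum + nn%:R * eta / (nn%:R * (s * (1 - 2 * eta) + eta) - (1 - eta)) in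
  let Cp := Cplus nn ns p eta taum in
  let Cm := Cminus nn ns p eta taup in
  [/\ lambda_max Cp <= B,
      taup <= lambda_min Cm
    & forall S : 'M[R]_k, is_inv_sqrt Cm S ->
        opnorm (S *m Cp *m S) <= lambda_max Cp / lambda_min Cm
        /\ lambda_max Cp / lambda_min Cm <= B / taup].
Proof.
move=> hk hsum p0 p1 e0 e12 tp tm hdp hdm s hs B Cp Cm.
have k0 : (0 < k)%N by apply: leq_trans hk.
pose i0 := Ordinal k0.
set nR := (nn%:R : R).
have e1 : 0 < 1 - 2 * eta by lra.
have nsle : forall i, (ns i <= nn)%N.
  by move=> i; rewrite -hsum (bigD1 i) //= leq_addr.
have nR0 : 0 < nR.
  rewrite ltr0n lt0n; apply/negP => /eqP n00.
  have := hdp i0; have := nsle i0; rewrite n00 leqn0 => /eqP ->.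
  rewrite /dplus !mul0r add0r sub0r mulrN oppr_gt0 => h.
  have : 0 < p * (1 - eta) by apply: mulr_gt0 => //; lra.
  lra.
have hsumR : \sum_i (ns i)%:R = nR :> R by rewrite -natr_sum hsum.
have s_le : forall i, s <= (ns i)%:R / nR.
  by move=> i; rewrite hs; exact: bigmin_le.
have [j0 hj0] : exists j, (ns j)%:R / nR <= s.
  have hF : forall i, xpredT i -> (ns i)%:R / nR <= 1.
    by move=> i _; rewrite ler_pdivrMr // mul1r ler_nat nsle.
  have [j _ hj] := @eq_bigmin _ _ _ (1:R) i0 xpredT (fun i => (ns i)%:R / nR) isT hF.
  exists j; rewrite hs; move: hj => /= <-; exact: lexx.
set As := nR * (s * (1 - 2 * eta) + eta) - (1 - eta).
have aE : forall i, dplus p eta nn (ns i) / p =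
    (ns i)%:R * (1 - 2 * eta) + nR * eta - (1 - eta).
  by move=> i; rewrite /dplus mulrC mulKf ?gt_eqF.
have As_le : forall i, As <= dplus p eta nn (ns i) / p.
  move=> i; rewrite aE /As.
  have h : nR * s <= (ns i)%:R by rewrite mulrC -ler_pdivlMr // s_le.
  nra.
have As_gt0 : 0 < As.
  have h : (ns j0)%:R <= nR * s by rewrite mulrC -ler_pdivrMr.
  have h2 : 0 < dplus p eta nn (ns j0) / p by apply: divr_gt0.
  rewrite aE in h2; rewrite /As; nra.
have B_ge : taum <= B.
  rewrite /B lerDl; apply: divr_ge0; last exact: ltW.
  by apply: mulr_ge0 => //; exact: ltW.
have B_ge0 : 0 <= B by apply: le_trans B_ge.
have delp : forall i, 1 + taum + p / dplus p eta nn (ns i) *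
      (1 - eta - (ns i)%:R * (1 - 2 * eta)) =
    taum + p * eta * nR / dplus p eta nn (ns i).
  move=> i; have := hdp i; rewrite /dplus => h; field.
  exact: pos_side h.
have delm : forall i, 1 + taup + p / dminus p eta nn (ns i) *
      (eta + (ns i)%:R * (1 - 2 * eta)) =
    taup + p * (1 - eta) * nR / dminus p eta nn (ns i).
  move=> i; have := hdm i; rewrite /dminus => h; field.
  exact: pos_side h.
have delp_le : forall i, taum + p * eta * nR / dplus p eta nn (ns i) <= B.
  move=> i; rewrite /B lerD2l.
  have -> : p * eta * nR / dplus p eta nn (ns i) =
      nR * eta / (dplus p eta nn (ns i) / p).
    by field; rewrite !gt_eqF.
  apply: ler_wpM2l; first by apply: mulr_ge0 => //; exact: ltW.
  rewrite lef_pV2 ?As_le //; rewrite posrE //.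
  by apply: divr_gt0.
pose Up i := Num.sqrt ((ns i)%:R / dplus p eta nn (ns i)).
pose Um i := Num.sqrt ((ns i)%:R / dminus p eta nn (ns i)).
have Up2 : forall i, Up i ^+ 2 * dplus p eta nn (ns i) = (ns i)%:R.
  move=> i; rewrite sqr_sqrtr ?divfK ?gt_eqF //.
  by apply: divr_ge0; [exact: ler0n | exact: ltW].
have Um2 : forall i, Um i ^+ 2 * dminus p eta nn (ns i) = (ns i)%:R.
  move=> i; rewrite sqr_sqrtr ?divfK ?gt_eqF //.
  by apply: divr_ge0; [exact: ler0n | exact: ltW].
have qCp : forall x, bil Cp x x = - p * eta * (\sum_i Up i * x i 0) ^+ 2 +
    \sum_i (taum + p * eta * nR / dplus p eta nn (ns i)) * x i 0 ^+ 2.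
  move=> x; rewrite /Cp /Cplus.
  rewrite (qdiag (- p * eta) Up (fun i => 1 + taum + p / dplus p eta nn (ns i) *
      (1 - eta - (ns i)%:R * (1 - 2 * eta))) x).
  by congr (_ + _); apply: eq_bigr => i _; rewrite delp.
have qCm : forall x, bil Cm x x = - p * (1 - eta) * (\sum_i Um i * x i 0) ^+ 2 +
    \sum_i (taup + p * (1 - eta) * nR / dminus p eta nn (ns i)) * x i 0 ^+ 2.
  move=> x; rewrite /Cm /Cminus.
  rewrite (qdiag (- p * (1 - eta)) Um (fun i => 1 + taup + p / dminus p eta nn (ns i) *
      (eta + (ns i)%:R * (1 - 2 * eta))) x).
  by congr (_ + _); apply: eq_bigr => i _; rewrite delm.
have Cp_lo : forall x, taum * n2 x <= bil Cp x x.
  move=> x; rewrite qCp n2E mulr_sumr.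
  have h := @psd_gen R k (p * eta) nR Up (fun i => dplus p eta nn (ns i))
    (fun i => (ns i)%:R) x (mulr_ge0 (ltW p0) e0) hdp Up2 hsumR.
  under [X in _ <= _ + X]eq_bigr do rewrite mulrDl.
  rewrite big_split /=.
  lra.
have Cp_hi : forall x, bil Cp x x <= B * n2 x.
  move=> x; rewrite qCp n2E mulr_sumr.
  have h1 : 0 <= p * eta * (\sum_i Up i * x i 0) ^+ 2.
    by apply: mulr_ge0; [apply: mulr_ge0 => //; exact: ltW | exact: sqr_ge0].
  have h2 : \sum_i (taum + p * eta * nR / dplus p eta nn (ns i)) * x i 0 ^+ 2
      <= \sum_i B * x i 0 ^+ 2.
    by apply: ler_sum => i _; apply: ler_wpM2r; [exact: sqr_ge0 | exact: delp_le].
  lra.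
have e2 : 0 <= 1 - eta by lra.
have Cm_lo : forall x, taup * n2 x <= bil Cm x x.
  move=> x; rewrite qCm n2E mulr_sumr.
  have h := @psd_gen R k (p * (1 - eta)) nR Um (fun i => dminus p eta nn (ns i))
    (fun i => (ns i)%:R) x (mulr_ge0 (ltW p0) e2) hdm Um2 hsumR.
  under [X in _ <= _ + X]eq_bigr do rewrite mulrDl.
  rewrite big_split /=.
  lra.
have CpT : Cp^T = Cp.
  apply/matrixP => i j; rewrite /Cp /Cplus !mxE.
  have [->//|ne] := eqVneq i j.
  rewrite [false%:R]/(0%:R) !mul0r !addr0; ring.
have CmT : Cm^T = Cm.
  apply/matrixP => i j; rewrite /Cm /Cminus !mxE.
  have [->//|ne] := eqVneq i j.
  rewrite [false%:R]/(0%:R) !mul0r !addr0; ring.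
have cp_nz : char_poly Cp != 0 := monic_neq0 (char_poly_monic Cp).
have cm_nz : char_poly Cm != 0 := monic_neq0 (char_poly_monic Cm).
have L_le : lambda_max Cp <= B.
  rewrite /lambda_max; have := mem_last 0 (rootsR (char_poly Cp)).
  rewrite inE => /orP[/eqP ->//|hin].
  have rt := roots_on_root (roots_on_rootsR cp_nz) hin.
  have [x [hx e]] := eig_vec rt.
  by have := Cp_hi x; rewrite e ler_pM2r.
have L_ge0 : 0 <= lambda_max Cp.
  rewrite /lambda_max; have := mem_last 0 (rootsR (char_poly Cp)).
  rewrite inE => /orP[/eqP ->//|hin].
  have rt := roots_on_root (roots_on_rootsR cp_nz) hin.
  have [x [hx e]] := eig_vec rt.
  have := Cp_lo x; rewrite e => h.
  have : 0 <= last 0 (rootsR (char_poly Cp)) * n2 x.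
    by apply: le_trans h; apply: mulr_ge0 => //; exact: n2_ge0.
  by rewrite pmulr_lge0.
have roots_ge : forall r, root (char_poly Cm) r -> taup <= r.
  move=> r rt; have [x [hx e]] := eig_vec rt.
  by have := Cm_lo x; rewrite e ler_pM2r.
have tp_root : root (char_poly Cm) taup.
  rewrite -eigenvalue_root_char; apply/eigenvalueP.
  exists (\row_i (Um i * dminus p eta nn (ns i))).
    apply/rowP => j; rewrite /Cm /Cminus !mxE.
    transitivity (\sum_i ((- p * (1 - eta) * Um j) * (Um i ^+ 2 * dminus p eta nn (ns i))
       + (i == j)%:R * (Um i * dminus p eta nn (ns i) *
          (1 + taup + p / dminus p eta nn (ns i) * (eta + (ns i)%:R * (1 - 2 * eta)))))).
      by apply: eq_bigr => i _; rewrite !mxE /Um; ring.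
    rewrite big_split /= -mulr_sumr.
    rewrite (eq_bigr (fun i => (ns i)%:R)); last by move=> i _; exact: Um2.
    rewrite hsumR (bigD1 j) //= eqxx mul1r big1 ?addr0; last first.
      by move=> i /negPf ->; rewrite mul0r.
    rewrite delm; have := hdm j => hj.
    field; rewrite gt_eqF //.
  apply/eqP => /rowP h.
  have : \sum_i Um i * (Um i * dminus p eta nn (ns i)) = 0.
    by apply: big1 => i _; have := h i; rewrite !mxE => ->; rewrite mulr0.
  under eq_bigr do rewrite mulrA -expr2 Um2.
  by rewrite hsumR => /eqP; rewrite gt_eqF.
have M_eq : lambda_min Cm = taup.
  have tin : taup \in rootsR (char_poly Cm) := in_rootsR cm_nz tp_root.
  rewrite /lambda_min; apply/eqP; rewrite eq_le; apply/andP; split.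
    exact: head_min (sorted_roots _ _ _) tin.
  move: tin; case E: (rootsR (char_poly Cm)) => [//|y l] _ /=.
  apply: roots_ge; apply: (roots_on_root (roots_on_rootsR cm_nz)).
  by rewrite E mem_head.
have Cm_unit : Cm \in unitmx.
  rewrite unitmxE unitfE; apply/negP => /eqP d0.
  have r0 : root (char_poly Cm) 0.
    by rewrite /root horner_coef0 char_poly_det d0 mulr0.
  by have := roots_ge 0 r0; rewrite leNgt tp.
set L := lambda_max Cp.
split => //; first by rewrite M_eq.
move=> S [hST [hSpd hSS]]; rewrite M_eq; split; last first.
  by apply: ler_wpM2r => //; rewrite invr_ge0 ltW.
set c := L / taup.
have c0 : 0 <= c by apply: divr_ge0 => //; exact: ltW.
have hSu : forall u, n2 (S *m u) <= n2 u / taup.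
  move=> u; set y := invmx Cm *m u.
  have uE : u = Cm *m y by rewrite /y mulKVmx.
  have tE : n2 (S *m u) = bil 1%:M u y.
    by rewrite /n2 /bil mulmx1 trmx_mul hST /y -hSS !mulmxA.
  have tE2 : bil 1%:M u y = bil Cm y y.
    by rewrite /bil mulmx1 {1}uE trmx_mul CmT.
  have n2b : forall z : 'cV[R]_k, bil 1%:M z z = n2 z by move=> z; rewrite /bil mulmx1.
  have psd1 : forall z : 'cV[R]_k, 0 <= bil 1%:M z z.
    by move=> z; rewrite n2b; exact: n2_ge0.
  have cs := @cs_bil R k 1%:M u y (trmx1 _ _) psd1.
  rewrite !n2b in cs.
  have h1 := Cm_lo y; rewrite -tE2 -tE in h1.
  rewrite -tE in cs.
  set t := n2 (S *m u) in h1 cs *.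
  have nu := n2_ge0 u; have ny := n2_ge0 y.
  rewrite ler_pdivlMr //.
  have t0 : 0 <= t by rewrite /t; exact: n2_ge0.
  have a1 : taup * t ^+ 2 <= taup * (n2 u * n2 y) by apply: ler_wpM2l => //; exact: ltW.
  have a2 : n2 u * (taup * n2 y) <= n2 u * t by apply: ler_wpM2l.
  have a : (taup * t) * t <= n2 u * t.
    have -> : taup * t * t = taup * t ^+ 2 by ring.
    have e3 : n2 u * (taup * n2 y) = taup * (n2 u * n2 y) by ring.
    rewrite e3 in a2; exact: le_trans a1 a2.
  have [->|tn] := eqVneq t 0; first by rewrite mul0r.
  have tpos : 0 < t by rewrite lt_def tn t0.
  by rewrite mulrC -(ler_pM2r tpos).
have P'T : (S *m Cp *m S)^T = S *m Cp *m S by rewrite !trmx_mul hST CpT mulmxA.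
have bilP : forall u, bil (S *m Cp *m S) u u = bil Cp (S *m u) (S *m u).
  by move=> u; rewrite /bil trmx_mul hST !mulmxA.
have P'ge0 : forall u, 0 <= bil (S *m Cp *m S) u u.
  move=> u; rewrite bilP; apply: le_trans (Cp_lo _).
  by apply: mulr_ge0 => //; exact: n2_ge0.
have P'le : forall u, bil (S *m Cp *m S) u u <= c * n2 u.
  move=> u; rewrite bilP; apply: le_trans (spec_upper _ CpT) _.
  rewrite -/(lambda_max Cp) -/L -/(n2 (S *m u)).
  apply: le_trans (ler_wpM2l L_ge0 (hSu u)) _.
  by rewrite /c mulrA mulrAC.
apply: ge_sup.
  exists (vnorm (S *m Cp *m S *m delta_mx i0 0)).
  exists (delta_mx i0 0); split => //.
  rewrite /vnorm (bigD1 i0) //= big1 ?addr0; last first.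
    by move=> i /negPf ne; rewrite mxE ne /= expr0n.
  by rewrite mxE !eqxx expr1n sqrtr1.
move=> r [x [hx ->]].
have n2x : n2 x = 1.
  have vE : vnorm x = Num.sqrt (n2 x) by rewrite /vnorm n2E.
  by rewrite -(sqr_sqrtr (n2_ge0 x)) -vE hx expr1n.
set w := S *m Cp *m S *m x.
have nw : n2 w = bil (S *m Cp *m S) x w.
  by rewrite /n2 /bil /w [(_ *m x)^T]trmx_mul P'T !mulmxA.
have cs := @cs_bil R k _ x w P'T P'ge0.
rewrite -nw in cs.
have h1 := P'le x; have h2 := P'le w; rewrite n2x mulr1 in h1.
have nw0 := n2_ge0 w.
have hb : n2 w <= c ^+ 2.
  have [->|wp] := eqVneq (n2 w) 0; first exact: sqr_ge0.
  have wpos : 0 < n2 w by rewrite lt_def wp nw0.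
  have : n2 w ^+ 2 <= c ^+ 2 * n2 w.
    apply: le_trans cs _; rewrite expr2 -mulrA.
    apply: le_trans (ler_wpM2r (P'ge0 w) h1) _.
    by apply: ler_wpM2l.
  by rewrite expr2 ler_pM2r.
rewrite /vnorm -n2E -[c](ger0_norm c0) -sqrtr_sqr.
exact: ler_wsqrtr.
Qed.
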